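(* Consider the sensor-network Kalman filtering model of the context with a single sensor ($M=1$, so $S_1$ transmits directly to the gateway $S_0$ and $C(k)=\gamma_1(k)C_1$) and a time-invariant system matrix $A(k)=A$ for all $k$. Suppose the network state process $\{\Xi(k)\}$ is a time-homogeneous Markov chain with transition probabilities $p_{ij}$, $i,j\in\mathbb{B}$, the power and bit-rate control laws are of the form $u_1(k)=\kappa_1(\Xi(k),h_1(k))$, $b_1(k)=\eta_1(\Xi(k),h_1(k))$, and $C_1$ has full column rank. If there exists $\rho\in[0,1)$ such that $$\|A\|^2\sum_{j\in\mathbb{B}}p_{ij}(1-\phi_{1|j})\le\rho\quad\text{for all }i\in\mathbb{B},$$ then the Kalman filter is exponentially bounded.
   Context: System: $x(k+1)=Ax(k)+w(k)$, $k\in\mathbb{N}_0$, $x(k)\in\mathbb{R}^n$, $x(0)\sim\mathcal N(x_0,P_0)$, $\{w(k)\}$ independent with $w(k)\sim\mathcal N(0,Q(k))$; one sensor $y_1(k)=C_1x(k)+v_1(k)$, $C_1\in\mathbb{R}^{l_1\times n}$, $\{v_1(k)\}$ independent with $v_1(k)\sim\mathcal N(0,R_1(k))$; $x(0),w,v_1$ mutually independent; $\{Q(k)\},\{R_1(k)\}$ deterministic, bounded, known. $\|\cdot\|$ is the spectral norm. Fading model: network state $\Xi(k)\in\mathbb{B}=\{1,\dots,|\mathbb{B}|\}$ (finite); channel power gain $h_1(k)\ge0$ with time-homogeneous conditional distribution given the network state, gains at different times conditionally independent given the network states. The link success indicator $\gamma_1(k)\in\{0,1\}$ ($1$ iff the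 packet from $S_1$ reaches the gateway at time $k$) satisfies $\Pr\{\gamma_1(k)=1\mid h_1(k)=h,u_1(k)=u,b_1(k)=b\}=f_1(hu,b)$ with $u_1$ the transmit power, $b_1$ the bit-rate, $f_1$ increasing in the first and decreasing in the second argument. Conditioned on the network states the $\gamma_1(k)$ are independent over time, and $\phi_{1|j}=\Pr\{\gamma_1(k)=1\mid\Xi(k)=j\}$ does not depend on $k$; the network and dropout processes are independent of $x(0),w,v_1$. Kalman filter: $P(k+1|k)=AP(k|k-1)A^T+Q(k)-K(k)C_1P(k|k-1)A^T$, $K(k)=\gamma_1(k)AP(k|k-1)C_1^T(C_1P(k|k-1)C_1^T+R_1(k))^{-1}$, $P(0|-1)=P_0$ (with the corresponding state-estimate recursion). The filter is exponentially bounded if there exist finite $\alpha,\beta$ and $\rho'\in[0,1)$ with $\mathbf{E}\{\operatorname{tr}P(k|k-1)\}\le\alpha\rho'^k+\beta$ for all $k\in\mathbb{N}_0$. *)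

(* Defs.v *)
From HB Require Import structures.
From mathcomp Require Import all_boot all_order all_algebra.
From mathcomp Require Import boolp classical_sets reals.
Set Implicit Arguments. Unset Strict Implicit. Unset Printing Implicit Defensive.
Import Order.TTheory GRing.Theory Num.Theory.
Local Open Scope ring_scope.
Local Open Scope classical_set_scope.

Section KF.
Variable R : realType.

Definition vnorm n (x : 'cV[R]_n) : R := Num.sqrt (\sum_i (x i 0) ^+ 2).

Definition specnorm m n (M : 'M[R]_(m, n)) : R :=
  sup [set vnorm (M *m x) | x in [set x : 'cV[R]_n | vnorm x <= 1]].

Definition qform n (M : 'M[R]_n) (x : 'cV[R]_n) : R := (x^T *m M *m x) 0 0.

Definition psd n (M : 'M[R]_n) : Prop := M^T = M /\ forall x, 0 <= qform M x.
Definition pd n (M : 'M[R]_n) : Prop :=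
  M^T = M /\ forall x, x != 0 -> 0 < qform M x.

(* Kalman filter prediction error covariance P(k|k-1) for a given
   realization g of the dropout indicator gamma_1 (g k = gamma_1(k)). *)
Fixpoint kf_cov n l (A : 'M[R]_n) (Q : nat -> 'M[R]_n) (C : 'M[R]_(l, n))
  (Rv : nat -> 'M[R]_l) (P0 : 'M[R]_n) (g : nat -> bool) (k : nat) : 'M[R]_n :=
  match k with
  | 0 => P0
  | k'.+1 =>
    let P := kf_cov A Q C Rv P0 g k' in
    let K := (if g k' then 1 else 0) *: (A *m P *m C^T *m invmx (C *m P *m C^T + Rv k')) in
    A *m P *m A^T + Q k' - K *m C *m P *m A^T
  end.

(* Probability that the network-state chain takes the values xs at times
   0..size xs - 1, given initial distribution pi0 and transitions p. *)
Fixpoint chain_path_w B (p : 'I_B -> 'I_B -> R) (x : 'I_B) (r : seq 'I_B) : R :=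
  match r with
  | [::] => 1
  | y :: r' => p x y * chain_path_w p y r'
  end.

Definition chain_w B (pi0 : 'I_B -> R) (p : 'I_B -> 'I_B -> R) (xs : seq 'I_B) : R :=
  match xs with
  | [::] => 1
  | x :: r => pi0 x * chain_path_w p x r
  end.

(* Conditional probability of the dropout pattern gs given network states xs:
   conditionally independent, Pr{gamma_1(t)=1 | Xi(t)=j} = phi j. *)
Definition drop_w B (phi : 'I_B -> R) k (xs : k.-tuple 'I_B) (gs : k.-tuple bool) : R :=
  \prod_(i < k) (if tnth gs i then phi (tnth xs i) else 1 - phi (tnth xs i)).

(* E{ tr P(k|k-1) }: P(k|k-1) depends only on gamma_1(0..k-1); expectation over
   the joint law of (Xi(0..k-1), gamma_1(0..k-1)). *)
Definition exp_tr_P B (pi0 : 'I_B -> R) (p : 'I_B -> 'I_B -> R) (phi : 'I_B -> R)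
  n l (A : 'M[R]_n) (Q : nat -> 'M[R]_n) (C : 'M[R]_(l, n))
  (Rv : nat -> 'M[R]_l) (P0 : 'M[R]_n) (k : nat) : R :=
  \sum_(xs : k.-tuple 'I_B) \sum_(gs : k.-tuple bool)
    chain_w pi0 p xs * drop_w phi xs gs * \tr (kf_cov A Q C Rv P0 (nth false gs) k).

Definition exp_bounded (E : nat -> R) : Prop :=
  exists (alpha beta rho' : R), 0 <= rho' < 1 /\
    forall k, E k <= alpha * rho' ^+ k + beta.

End KF.

(* Main.v *)
Require Import Defs.
From HB Require Import structures.
From mathcomp Require Import all_boot all_order all_algebra.
From mathcomp Require Import boolp classical_sets reals.
From mathcomp Require Import ring lra.
Import Order.TTheory GRing.Theory Num.Theory.
Local Open Scope ring_scope.
Set Implicit Arguments. Unset Strict Implicit. Unset Printing Implicit Defensive.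

Definition nsq (R : realType) n (x : 'cV[R]_n) : R := \sum_i (x i 0) ^+ 2.

Lemma nsq_ge0 (R : realType) n (x : 'cV[R]_n) : 0 <= nsq x.
Proof. by apply: sumr_ge0 => i _; apply: sqr_ge0. Qed.

Lemma vnorm_sqr (R : realType) n (x : 'cV[R]_n) : vnorm x ^+ 2 = nsq x.
Proof. by rewrite /vnorm sqr_sqrtr // nsq_ge0. Qed.

Lemma vnorm_ge0 (R : realType) n (x : 'cV[R]_n) : 0 <= vnorm x.
Proof. exact: sqrtr_ge0. Qed.

Lemma nsq_mx (R : realType) n (x : 'cV[R]_n) : nsq x = (x^T *m x) 0 0.
Proof. by rewrite /nsq mxE; apply: eq_bigr => i _; rewrite mxE expr2. Qed.

Lemma dotE (R : realType) n (x y : 'cV[R]_n) :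
  (x^T *m y) 0 0 = \sum_i x i 0 * y i 0.
Proof. by rewrite mxE; apply: eq_bigr => i _; rewrite mxE. Qed.

Lemma nsq0_entry (R : realType) n (x : 'cV[R]_n) :
  nsq x = 0 -> forall i, x i 0 = 0.
Proof.
move=> h i; have := @psumr_eq0P _ _ predT (fun i => x i 0 ^+ 2) (fun _ _ => sqr_ge0 _) h i isT.
by move=> /eqP; rewrite sqrf_eq0 => /eqP.
Qed.

Lemma CS (R : realType) n (x y : 'cV[R]_n) :
  (x^T *m y) 0 0 <= vnorm x * vnorm y.
Proof.
rewrite dotE; set a := vnorm x; set b := vnorm y.
have ha : 0 <= a := vnorm_ge0 x. have hb : 0 <= b := vnorm_ge0 y.
have key : 2 * (a * b) * (\sum_i x i 0 * y i 0) <= 2 * (a * b) * (a * b).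
  have : 0 <= \sum_i (x i 0 * b - y i 0 * a) ^+ 2 by apply: sumr_ge0 => i _; apply: sqr_ge0.
  have e : \sum_i (x i 0 * b - y i 0 * a) ^+ 2 =
     nsq x * b ^+ 2 + nsq y * a ^+ 2 - 2 * (a * b) * (\sum_i x i 0 * y i 0).
    rewrite /nsq !mulr_suml mulr_sumr -big_split -sumrB /=.
    by apply: eq_bigr => i _; ring.
  rewrite e -!vnorm_sqr -/a -/b => h.
  suff : 0 <= 2 * (a * b) * (a * b) - 2 * (a * b) * (\sum_i x i 0 * y i 0) by rewrite subr_ge0.
  by move: h; congr (_ <= _); ring.
have [ab0|abp] := eqVneq (a * b) 0.
  rewrite ab0; move: ab0 => /eqP; rewrite mulf_eq0 => /orP [] /eqP h0.
    have hx : nsq x = 0 by rewrite -vnorm_sqr -/a h0 expr2 mulr0.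
    by rewrite big1 // => i _; rewrite (nsq0_entry hx) mul0r.
  have hy : nsq y = 0 by rewrite -vnorm_sqr -/b h0 expr2 mulr0.
  by rewrite big1 // => i _; rewrite (nsq0_entry hy) mulr0.
have abpos : 0 < 2 * (a * b) by rewrite mulr_gt0 // lt_def abp mulr_ge0.
by rewrite -(ler_pM2l abpos).
Qed.

Lemma sumsq_le (R : realType) (I : finType) (a : I -> R) :
  (forall i, 0 <= a i) -> \sum_i a i ^+ 2 <= (\sum_i a i) ^+ 2.
Proof.
move=> h; rewrite expr2 mulr_suml; apply: ler_sum => i _.
rewrite expr2 ler_wpM2l //; rewrite (bigD1 i) //= lerDl.
by apply: sumr_ge0.
Qed.

Lemma vnorm_le_abs (R : realType) n (w : 'cV[R]_n) :
  vnorm w <= \sum_i `|w i 0|.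
Proof.
have h0 : 0 <= \sum_i `|w i 0| by apply: sumr_ge0.
rewrite -(ger0_norm h0) -sqrtr_sqr /vnorm ler_sqrt ?sqr_ge0 //.
apply: le_trans (sumsq_le (a := fun i => `|w i 0|) _) => //.
by rewrite le_eqVlt; apply/orP; left; apply/eqP; apply: eq_bigr => i _; rewrite real_normK ?num_real.
Qed.

Lemma entry_le_vnorm (R : realType) n (x : 'cV[R]_n) i : `|x i 0| <= vnorm x.
Proof.
rewrite -sqrtr_sqr /vnorm ler_sqrt ?nsq_ge0 //.
by rewrite /nsq (bigD1 i) //= lerDl; apply: sumr_ge0 => j _; apply: sqr_ge0.
Qed.

Lemma vnormZ (R : realType) n (t : R) (x : 'cV[R]_n) : vnorm (t *: x) = `|t| * vnorm x.
Proof.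
rewrite /vnorm -sqrtr_sqr -sqrtrM ?sqr_ge0 //; congr Num.sqrt.
by rewrite mulr_sumr; apply: eq_bigr => i _; rewrite mxE exprMn.
Qed.

Lemma vnorm0_eq (R : realType) n (x : 'cV[R]_n) : vnorm x = 0 -> x = 0.
Proof.
move=> h; have hx : nsq x = 0 by rewrite -vnorm_sqr h expr2 mulr0.
by apply/matrixP => i j; rewrite (ord1 j) mxE (nsq0_entry hx).
Qed.

Definition specset (R : realType) m n (M : 'M[R]_(m, n)) :=
  [set vnorm (M *m x) | x in [set x : 'cV[R]_n | vnorm x <= 1]]%classic.

Lemma specset_sup (R : realType) m n (M : 'M[R]_(m, n)) : has_sup (specset M).
Proof.
split.
  exists (vnorm (M *m 0)); exists 0 => //=.
  by rewrite /vnorm /nsq big1 ?sqrtr0 // => i _; rewrite mxE expr2 mulr0.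
exists (\sum_i \sum_j `|M i j|) => _ [x /= hx <-].
apply: le_trans (vnorm_le_abs _) _; apply: ler_sum => i _.
rewrite mxE; apply: le_trans (ler_norm_sum _ _ _) _; apply: ler_sum => j _.
rewrite normrM ler_piMr //; apply: le_trans (entry_le_vnorm _ _) hx.
Qed.

Lemma specnorm_ge0 (R : realType) m n (M : 'M[R]_(m, n)) : 0 <= specnorm M.
Proof.
have := sup_upper_bound (specset_sup M); apply.
exists 0 => /=; first by rewrite /vnorm /nsq big1 ?sqrtr0 // => i _; rewrite mxE expr2 mulr0.
by rewrite mulmx0 /vnorm /nsq big1 ?sqrtr0 // => i _; rewrite mxE expr2 mulr0.
Qed.

Lemma spec_bound (R : realType) m n (M : 'M[R]_(m, n)) x :
  vnorm (M *m x) <= specnorm M * vnorm x.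
Proof.
have [h0|hp] := eqVneq (vnorm x) 0.
  by rewrite h0 mulr0 (vnorm0_eq h0) mulmx0 /vnorm /nsq big1 ?sqrtr0 // => i _; rewrite mxE expr2 mulr0.
have pos : 0 < vnorm x by rewrite lt_def hp vnorm_ge0.
have : vnorm (M *m ((vnorm x)^-1 *: x)) <= specnorm M.
  apply: (sup_upper_bound (specset_sup M)); exists ((vnorm x)^-1 *: x) => //=.
  by rewrite vnormZ ger0_norm ?invr_ge0 ?vnorm_ge0 // mulVf.
rewrite -scalemxAr vnormZ ger0_norm ?invr_ge0 ?vnorm_ge0 //.
by rewrite mulrC -ler_pdivlMr ?invr_gt0 // invrK.
Qed.

Lemma vnorm_mul (R : realType) n (x : 'cV[R]_n) : vnorm x * vnorm x = nsq x.
Proof. by rewrite -expr2 vnorm_sqr. Qed.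

Lemma qform_le_spec (R : realType) n (P : 'M[R]_n) x :
  qform P x <= specnorm P * nsq x.
Proof.
rewrite /qform -mulmxA; apply: le_trans (CS _ _) _.
rewrite -vnorm_mul mulrA [vnorm x * _]mulrC ler_wpM2r ?vnorm_ge0 //.
exact: spec_bound.
Qed.

Lemma sqr_le (R : realType) (u v : R) : 0 <= u -> u <= v -> u ^+ 2 <= v ^+ 2.
Proof. by move=> hu huv; rewrite !expr2 ler_pM // (le_trans hu). Qed.

Lemma nsq_spec (R : realType) m n (M : 'M[R]_(m, n)) x :
  nsq (M *m x) <= specnorm M ^+ 2 * nsq x.
Proof.
rewrite -!vnorm_sqr -exprMn; apply: sqr_le; first exact: vnorm_ge0.
exact: spec_bound.
Qed.

Lemma nsq_trmx (R : realType) m n (A : 'M[R]_(m, n)) (x : 'cV[R]_m) :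
  nsq (A^T *m x) <= specnorm A ^+ 2 * nsq x.
Proof.
set y := A^T *m x.
have h : vnorm y * vnorm y <= vnorm x * (specnorm A * vnorm y).
  rewrite vnorm_mul nsq_mx {2}/y trmx_mul trmxK -mulmxA.
  apply: le_trans (CS _ _) _; rewrite ler_wpM2l ?vnorm_ge0 //; exact: spec_bound.
have hy : vnorm y <= specnorm A * vnorm x.
  have [h0|hp] := eqVneq (vnorm y) 0.
    by rewrite h0 mulr_ge0 ?specnorm_ge0 ?vnorm_ge0.
  have pos : 0 < vnorm y by rewrite lt_def hp vnorm_ge0.
  by rewrite -(ler_pM2r pos) (le_trans h) // mulrA [vnorm x * _]mulrC.
rewrite -!vnorm_sqr -exprMn; apply: sqr_le => //; exact: vnorm_ge0.
Qed.

Lemma qform_cong (R : realType) n m (X : 'M[R]_(n, m)) (P : 'M[R]_m) x :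
  qform (X *m P *m X^T) x = qform P (X^T *m x).
Proof. by rewrite /qform trmx_mul trmxK !mulmxA. Qed.

Lemma qformD (R : realType) n (P P' : 'M[R]_n) x :
  qform (P + P') x = qform P x + qform P' x.
Proof. by rewrite /qform mulmxDr mulmxDl mxE. Qed.

Lemma qformB (R : realType) n (P P' : 'M[R]_n) x :
  qform (P - P') x = qform P x - qform P' x.
Proof.
have e : forall (M N : 'M[R]_1), (M - N) 0 0 = M 0 0 - N 0 0 by move=> M N; rewrite !mxE.
by rewrite /qform mulmxBr mulmxBl e.
Qed.

Lemma qform0 (R : realType) n (P : 'M[R]_n) : qform P 0 = 0.
Proof. by rewrite /qform mulmx0 mxE. Qed.

Lemma qform_delta (R : realType) n (P : 'M[R]_n) i : qform P (delta_mx i 0) = P i i.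
Proof.
rewrite /qform trmx_delta -rowE mxE (bigD1 i) //= big1 ?addr0.
  by rewrite !mxE !eqxx mulr1.
by move=> j hj; rewrite !mxE (negbTE hj) mulr0.
Qed.

Lemma nsq_qform (R : realType) n (x : 'cV[R]_n) : nsq x = qform 1%:M x.
Proof. by rewrite nsq_mx /qform mulmx1. Qed.

Lemma tr_bound (R : realType) n (P : 'M[R]_n) (lam : R) :
  (forall x, qform P x <= lam * nsq x) -> \tr P <= n%:R * lam.
Proof.
move=> h; rewrite /mxtrace. set lhs := (X in X <= _).
have -> : n%:R * lam = \sum_(i < n) lam by rewrite sumr_const card_ord mulr_natl.
apply: ler_sum => i _; have := h (delta_mx i 0).
by rewrite qform_delta nsq_qform qform_delta mxE eqxx mulr1.
Qed.

Lemma sym_cong (R : realType) n m (X : 'M[R]_(n, m)) (P : 'M[R]_m) :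
  P^T = P -> (X *m P *m X^T)^T = X *m P *m X^T.
Proof. by move=> hP; rewrite !trmx_mul trmxK hP mulmxA. Qed.

Lemma joseph (R : realType) n l (P : 'M[R]_n) (C : 'M[R]_(l, n)) (Rk : 'M[R]_l)
  (L : 'M[R]_(n, l)) :
  P^T = P -> Rk^T = Rk ->
  let S := C *m P *m C^T + Rk in
  S \in unitmx ->
  let K := P *m C^T *m invmx S in
  (1%:M - L *m C) *m P *m (1%:M - L *m C)^T + L *m Rk *m L^T =
  (P - K *m C *m P) + (L - K) *m S *m (L - K)^T.
Proof.
move=> hP hR S hSu K.
have hS : S^T = S by rewrite /S linearD /= sym_cong // hR.
have hKS : K *m S = P *m C^T by rewrite /K -mulmxA mulVmx // mulmx1.
have hKt : K^T = invmx S *m C *m P.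
  by rewrite /K !trmx_mul trmx_inv hS trmxK hP mulmxA.
have hSKt : S *m K^T = C *m P by rewrite hKt !mulmxA mulmxV // mul1mx.
have e1 : (L - K) *m S *m (L - K)^T =
   L *m S *m L^T - L *m (C *m P) - P *m C^T *m L^T + K *m (C *m P).
  rewrite linearB /= mulmxBl hKS !mulmxBr !mulmxBl -[L *m S *m K^T]mulmxA hSKt hKt /K !mulmxA.
  move: (L *m S *m L^T) (L *m C *m P) (P *m C^T *m L^T) (P *m C^T *m invmx S *m C *m P)
    => X1 X2 X3 X4.
  apply/matrixP => i j; rewrite !mxE; lra.
rewrite e1 /S mulmxDr mulmxDl.
rewrite linearB /= trmx1 trmx_mul.
rewrite ?mulmxDl ?mulmxDr ?mulmxBl ?mulmxBr ?mulNmx ?mulmxN ?mul1mx ?mulmx1.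
rewrite ?mulmxDl ?mulmxDr ?mulmxBl ?mulmxBr ?mulNmx ?mulmxN ?mul1mx ?mulmx1 !mulmxA.
move: (P *m C^T *m L^T) (L *m C *m P) (L *m C *m P *m C^T *m L^T) (L *m Rk *m L^T)
   (K *m C *m P) => X1 X2 X3 X4 X5.
apply/matrixP => i j; rewrite !mxE; lra.
Qed.

Lemma S_unit (R : realType) n l (P : 'M[R]_n) (C : 'M[R]_(l, n)) (Rk : 'M[R]_l) :
  (forall x, 0 <= qform P x) -> pd Rk ->
  C *m P *m C^T + Rk \in unitmx.
Proof.
move=> hP [_ hR]; rewrite unitmxE unitfE; apply/negP => /det0P [v hv hvS].
have hvt : v^T != 0 by apply: contra hv => /eqP h; rewrite -[v]trmxK h trmx0.
have := hR _ hvt; rewrite -(addr0 (qform Rk v^T)).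
have := hP (C^T *m v^T); rewrite -qform_cong => h1 h2.
have : 0 < qform (C *m P *m C^T + Rk) v^T by rewrite qformD; apply: lt_le_trans h2 _; rewrite addrC lerD2r.
by rewrite /qform trmxK hvS mul0mx mxE ltxx.
Qed.

Lemma step0 (R : realType) n (A P Q : 'M[R]_n) (lam c : R) :
  P^T = P -> (forall x, 0 <= qform P x) -> (forall x, qform P x <= lam * nsq x) ->
  0 <= lam -> psd Q -> specnorm Q <= c ->
  let P' := A *m P *m A^T + Q in
  P'^T = P' /\ (forall x, 0 <= qform P' x) /\
  (forall x, qform P' x <= (specnorm A ^+ 2 * lam + c) * nsq x).
Proof.
move=> hP hP0 hPl hl [hQ hQ0] hQc P'; split; first by rewrite /P' linearD /= sym_cong // hQ.
split => x; rewrite /P' qformD qform_cong.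
  by rewrite addr_ge0.
rewrite mulrDl; apply: lerD.
  apply: le_trans (hPl _) _; rewrite [specnorm A ^+ 2 * lam]mulrC -mulrA ler_wpM2l //; exact: nsq_trmx.
apply: le_trans (qform_le_spec _ _) _; rewrite ler_wpM2r ?nsq_ge0 //.
Qed.

Lemma pd_psd (R : realType) n (Rk : 'M[R]_n) : pd Rk -> forall x, 0 <= qform Rk x.
Proof.
move=> [_ h] x; have [->|hx] := eqVneq x 0; first by rewrite qform0.
exact: ltW (h _ hx).
Qed.

Lemma step1 (R : realType) n l (A P Q : 'M[R]_n) (C : 'M[R]_(l, n)) (Rk : 'M[R]_l)
  (L : 'M[R]_(n, l)) (c : R) :
  P^T = P -> (forall x, 0 <= qform P x) -> psd Q -> specnorm Q <= c ->
  pd Rk -> specnorm Rk <= c -> L *m C = 1%:M ->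
  let P' := A *m P *m A^T + Q -
     (A *m P *m C^T *m invmx (C *m P *m C^T + Rk)) *m C *m P *m A^T in
  P'^T = P' /\ (forall x, 0 <= qform P' x) /\
  (forall x, qform P' x <= (c * specnorm (L^T *m A^T) ^+ 2 + c) * nsq x).
Proof.
move=> hP hP0 [hQ hQ0] hQc hRpd hRc hLC.
have hR0 := pd_psd hRpd. have hRs : Rk^T = Rk by case: hRpd.
have hSu := S_unit C hP0 hRpd.
set S := C *m P *m C^T + Rk in hSu *.
set K := P *m C^T *m invmx S.
set M := P - K *m C *m P.
have eP : A *m P *m A^T + Q - (A *m P *m C^T *m invmx S) *m C *m P *m A^T = A *m M *m A^T + Q.
  rewrite /M mulmxBr mulmxBl /K !mulmxA.
  move: (A *m P *m A^T) (A *m P *m C^T *m invmx S *m C *m P *m A^T) => X1 X2.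
  apply/matrixP => i j; rewrite !mxE; lra.
have hJ := joseph _ hP hRs hSu.
have hMK : M = (1%:M - K *m C) *m P *m (1%:M - K *m C)^T + K *m Rk *m K^T.
  by rewrite hJ subrr mul0mx mul0mx addr0.
have hSq : forall z, 0 <= qform S z.
  by move=> z; rewrite /S qformD qform_cong addr_ge0.
have hMs : M^T = M by rewrite hMK linearD /= !sym_cong.
have hM0 : forall y, 0 <= qform M y.
  by move=> y; rewrite hMK qformD !qform_cong addr_ge0.
have hMl : forall y, qform M y <= c * nsq (L^T *m y).
  move=> y; have := hJ L; rewrite -/K -/M hLC subrr mul0mx mul0mx add0r => e.
  have -> : M = L *m Rk *m L^T - (L - K) *m S *m (L - K)^T by rewrite e addrK.
  rewrite qformB !qform_cong; apply: le_trans (_ : qform Rk (L^T *m y) <= _).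
    by rewrite lerBlDr lerDl.
  exact: le_trans (qform_le_spec _ _) (ler_wpM2r (nsq_ge0 _) hRc).
move=> P'; rewrite /P' eP; split; first by rewrite linearD /= sym_cong // hQ.
split => x; rewrite qformD qform_cong; first by rewrite addr_ge0.
rewrite mulrDl; apply: lerD.
  apply: le_trans (hMl _) _; rewrite -mulrA ler_wpM2l //.
    exact: le_trans (specnorm_ge0 _) hRc.
  by rewrite mulmxA; exact: nsq_spec.
apply: le_trans (qform_le_spec _ _) _; rewrite ler_wpM2r ?nsq_ge0 //.
Qed.

Definition hstep (R : realType) (a Cc : R) (b : bool) (v : R) : R :=
  (if b then 0 else a * v) + Cc.

Fixpoint runf (R : realType) (a Cc v : R) (g : nat -> bool) (k : nat) : R :=
  match k with 0 => v | k'.+1 => hstep a Cc (g k') (runf a Cc v g k') end.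

Lemma runf_ge0 (R : realType) (a Cc v : R) g k :
  0 <= a -> 0 <= Cc -> 0 <= v -> 0 <= runf a Cc v g k.
Proof.
move=> ha hC hv; elim: k => //= k ih; rewrite /hstep addr_ge0 //.
by case: (g k) => //; rewrite mulr_ge0.
Qed.

Lemma kf_inv (R : realType) n l (A : 'M[R]_n) (C : 'M[R]_(l, n))
  (Q : nat -> 'M[R]_n) (Rv : nat -> 'M[R]_l) (P0 : 'M[R]_n) (L : 'M[R]_(n, l)) (c : R) :
  psd P0 -> (forall k, psd (Q k)) -> (forall k, pd (Rv k)) ->
  (forall k, specnorm (Q k) <= c /\ specnorm (Rv k) <= c) -> L *m C = 1%:M ->
  forall g k,
  let P := kf_cov A Q C Rv P0 g k in
  P^T = P /\ (forall x, 0 <= qform P x) /\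
  (forall x, qform P x <= runf (specnorm A ^+ 2) (c * specnorm (L^T *m A^T) ^+ 2 + c)
                                (specnorm P0) g k * nsq x).
Proof.
move=> [hP0s hP0] hQ hR hc hLC g.
have c0 : 0 <= c by exact: le_trans (specnorm_ge0 _) (hc 0%N).1.
have Cc0 : 0 <= c * specnorm (L^T *m A^T) ^+ 2 + c by rewrite addr_ge0 // mulr_ge0 // sqr_ge0.
elim => [|k [ihs [ih0 ihl]]] /=.
  by split => //; split => // x; exact: qform_le_spec.
rewrite /hstep; case: (g k).
  rewrite scale1r add0r; have [h1 [h2 h3]] := step1 A ihs ih0 (hQ k) (hc k).1 (hR k) (hc k).2 hLC.
  by split => //; split.
rewrite scale0r !mul0mx subr0.
have lam0 : 0 <= runf (specnorm A ^+ 2) (c * specnorm (L^T *m A^T) ^+ 2 + c) (specnorm P0) g k.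
  by apply: runf_ge0 => //; [exact: sqr_ge0 | exact: specnorm_ge0].
have [h1 [h2 h3]] := step0 A ihs ih0 ihl lam0 (hQ k) (hc k).1.
split => //; split => // x; apply: le_trans (h3 x) _; rewrite ler_wpM2r ?nsq_ge0 //.
by rewrite lerD2l lerDr mulr_ge0 // sqr_ge0.
Qed.

Lemma tuple_split (R : realType) (T : finType) k (F : (k.+1).-tuple T -> R) :
  \sum_(t : (k.+1).-tuple T) F t = \sum_(x : T) \sum_(t : k.-tuple T) F [tuple of x :: t].
Proof.
rewrite (reindex (fun p : T * k.-tuple T => [tuple of p.1 :: p.2])) /=.
  by rewrite pair_big /=.
exists (fun t : (k.+1).-tuple T => (thead t, [tuple of behead t])) => [[x t]|t] _ /=.
  by rewrite theadE; congr pair; apply: val_inj.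
by rewrite -tuple_eta.
Qed.

Lemma tuple_sum0 (R : realType) (T : finType) (F : 0.-tuple T -> R) :
  \sum_(t : 0.-tuple T) F t = F [tuple].
Proof.
rewrite (eq_bigr (fun _ => F [tuple])); last by move=> t _; rewrite tuple0.
by rewrite sumr_const card_tuple expn0.
Qed.

Lemma runf_S (R : realType) (a Cc v : R) g k :
  runf a Cc v g k.+1 = runf a Cc (hstep a Cc (g 0%N) v) (fun t => g t.+1) k.
Proof. by elim: k => //= k ->. Qed.

Lemma runf_cons (R : realType) (a Cc v : R) b s k :
  runf a Cc v (nth false (b :: s)) k.+1 = runf a Cc (hstep a Cc b v) (nth false s) k.
Proof. exact: runf_S. Qed.

Lemma chain_path_wE (R : realType) B (p : 'I_B -> 'I_B -> R) x r :
  chain_path_w p x r = chain_w (p x) p r.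
Proof. by case: r. Qed.

Lemma drop_w_cons (R : realType) B (phi : 'I_B -> R) k x (xs : k.-tuple 'I_B) b
  (gs : k.-tuple bool) :
  drop_w phi [tuple of x :: xs] [tuple of b :: gs] =
  (if b then phi x else 1 - phi x) * drop_w phi xs gs.
Proof.
rewrite /drop_w big_ord_recl !tnth0; congr (_ * _).
by apply: eq_bigr => i _; rewrite !tnthS.
Qed.

Definition Eg (R : realType) B (mu : 'I_B -> R) (p : 'I_B -> 'I_B -> R) (phi : 'I_B -> R)
  (a Cc v : R) k : R :=
  \sum_(xs : k.-tuple 'I_B) \sum_(gs : k.-tuple bool)
    chain_w mu p xs * drop_w phi xs gs * runf a Cc v (nth false gs) k.

Lemma Eg0 (R : realType) B (mu : 'I_B -> R) p phi (a Cc v : R) :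
  Eg mu p phi a Cc v 0 = v.
Proof.
by rewrite /Eg tuple_sum0 tuple_sum0 /= /drop_w big_ord0 !mul1r.
Qed.

Lemma EgS (R : realType) B (mu : 'I_B -> R) p phi (a Cc v : R) k :
  Eg mu p phi a Cc v k.+1 =
  \sum_x mu x * \sum_(b : bool) (if b then phi x else 1 - phi x) *
     Eg (p x) p phi a Cc (hstep a Cc b v) k.
Proof.
rewrite /Eg tuple_split; apply: eq_bigr => x _.
under eq_bigr do rewrite tuple_split.
rewrite exchange_big mulr_sumr; apply: eq_bigr => b _.
rewrite mulrA mulr_sumr; apply: eq_bigr => xs _.
rewrite !mulr_sumr; apply: eq_bigr => gs _.
have -> : runf a Cc v (nth false [tuple of b :: gs]) k.+1 =
  runf a Cc (hstep a Cc b v) (nth false gs) k by exact: runf_cons.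
rewrite drop_w_cons /= chain_path_wE; ring.
Qed.

Lemma Eg_bound (R : realType) B (p : 'I_B -> 'I_B -> R) (phi : 'I_B -> R) (a Cc rho : R) :
  (forall i j, 0 <= p i j) -> (forall i, \sum_j p i j = 1) ->
  (forall j, 0 <= phi j <= 1) -> 0 <= rho < 1 ->
  (forall i, a * (\sum_j p i j * (1 - phi j)) <= rho) -> 0 <= a -> 0 <= Cc ->
  forall k x v, 0 <= v ->
  Eg (p x) p phi a Cc v k <= rho ^+ k * (v - Cc / (1 - rho)) + Cc / (1 - rho).
Proof.
move=> hp hp1 hphi /andP [r0 r1] hrho ha hC.
set M := Cc / (1 - rho).
have hM : M * (1 - rho) = Cc by rewrite /M divfK // subr_eq0 gt_eqF.
elim => [|k ih] x v hv.
  by rewrite Eg0 expr0 mul1r subrK.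
set r := rho ^+ k.
have r0' : 0 <= r by rewrite exprn_ge0.
rewrite EgS.
have step : forall y, \sum_(b : bool) (if b then phi y else 1 - phi y) *
     Eg (p y) p phi a Cc (hstep a Cc b v) k <=
     (r * (Cc - M) + M) + (1 - phi y) * (r * a * v).
  move=> y; rewrite big_bool /= /hstep.
  have [f0 f1] := andP (hphi y).
  have q1 : 0 <= 0 + Cc by rewrite add0r.
  have q2 : 0 <= a * v + Cc by rewrite addr_ge0 // mulr_ge0.
  have e1 := ih y _ q1. have e2 := ih y _ q2.
  have f2 : 0 <= 1 - phi y by rewrite subr_ge0.
  apply: le_trans (lerD (ler_wpM2l f0 e1) (ler_wpM2l f2 e2)) _.
  rewrite -/r; rewrite le_eqVlt; apply/orP; left; apply/eqP; ring.
apply: le_trans (_ : \sum_y p x y * ((r * (Cc - M) + M) + (1 - phi y) * (r * a * v)) <= _).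
  by apply: ler_sum => y _; rewrite ler_wpM2l.
under eq_bigr do rewrite mulrDr.
rewrite big_split /= -mulr_suml hp1 mul1r.
have -> : \sum_y p x y * ((1 - phi y) * (r * a * v)) = (r * v) * (a * \sum_y p x y * (1 - phi y)).
  rewrite !mulr_sumr; apply: eq_bigr => y _; ring.
have h2 : (r * v) * (a * \sum_y p x y * (1 - phi y)) <= (r * v) * rho.
  by rewrite ler_wpM2l ?mulr_ge0.
apply: le_trans (lerD (lexx _) h2) _.
rewrite exprSr -/r -hM; rewrite le_eqVlt; apply/orP; left; apply/eqP; ring.
Qed.

Lemma chain_w_ge0 (R : realType) B (mu : 'I_B -> R) (p : 'I_B -> 'I_B -> R) xs :
  (forall i, 0 <= mu i) -> (forall i j, 0 <= p i j) -> 0 <= chain_w mu p xs.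
Proof.
move=> hmu hp; case: xs => [|x r] //=; rewrite mulr_ge0 //.
by elim: r x => //= y r ih x; rewrite mulr_ge0.
Qed.

Lemma drop_w_ge0 (R : realType) B (phi : 'I_B -> R) k (xs : k.-tuple 'I_B) gs :
  (forall j, 0 <= phi j <= 1) -> 0 <= drop_w phi xs gs.
Proof.
move=> hphi; apply: prodr_ge0 => i _; have /andP [h0 h1] := hphi (tnth xs i).
by case: (tnth gs i) => //; rewrite subr_ge0.
Qed.

Theorem corollary1 (R : realType) (n l1 B : nat)
  (A : 'M[R]_n) (C1 : 'M[R]_(l1, n))
  (Q : nat -> 'M[R]_n) (R1 : nat -> 'M[R]_l1) (P0 : 'M[R]_n)
  (pi0 : 'I_B -> R) (p : 'I_B -> 'I_B -> R) (phi : 'I_B -> R) (rho : R) :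
  (* covariances *)
  psd P0 ->
  (forall k, psd (Q k)) ->
  (forall k, pd (R1 k)) ->
  (exists c : R, forall k, specnorm (Q k) <= c /\ specnorm (R1 k) <= c) ->
  (* initial distribution of the network state *)
  (forall i, 0 <= pi0 i) -> \sum_i pi0 i = 1 ->
  (* time-homogeneous Markov chain transition probabilities *)
  (forall i j, 0 <= p i j) -> (forall i, \sum_j p i j = 1) ->
  (* success probabilities phi_{1|j} *)
  (forall j, 0 <= phi j <= 1) ->
  (* C1 has full column rank *)
  \rank C1 = n ->
  0 <= rho < 1 ->
  (forall i, specnorm A ^+ 2 * (\sum_j p i j * (1 - phi j)) <= rho) ->
  exp_bounded (exp_tr_P pi0 p phi A Q C1 R1 P0).
Proof.
move=> hP0 hQ hR [c hc] hpi0 hpi1 hp hp1 hphi hrank hrho hcond.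
have /row_fullP [L hLC] : row_full C1 by rewrite /row_full hrank.
have c0 : 0 <= c by exact: le_trans (specnorm_ge0 _) (hc 0%N).1.
set a := specnorm A ^+ 2.
set Cc := c * specnorm (L^T *m A^T) ^+ 2 + c.
set lam0 := specnorm P0.
set M := Cc / (1 - rho).
have a0 : 0 <= a by exact: sqr_ge0.
have Cc0 : 0 <= Cc by rewrite addr_ge0 // mulr_ge0 // sqr_ge0.
have l0 : 0 <= lam0 by exact: specnorm_ge0.
have [r0 r1] := andP hrho.
have M0 : 0 <= M by rewrite divr_ge0 // subr_ge0 ltW.
have hE : forall k, exp_tr_P pi0 p phi A Q C1 R1 P0 k <= n%:R * Eg pi0 p phi a Cc lam0 k.
  move=> k; rewrite /exp_tr_P /Eg mulr_sumr; apply: ler_sum => xs _.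
  rewrite mulr_sumr; apply: ler_sum => gs _.
  have w0 : 0 <= chain_w pi0 p xs * drop_w phi xs gs.
    by rewrite mulr_ge0 ?chain_w_ge0 ?drop_w_ge0.
  have [_ [_ h3]] := kf_inv A hP0 hQ hR hc hLC (nth false gs) k.
  have ht := tr_bound h3.
  by rewrite [X in _ <= X]mulrCA ler_wpM2l.
have hEg : forall k, Eg pi0 p phi a Cc lam0 k <= lam0 + (a * lam0 + Cc + M).
  case => [|k]; first by rewrite Eg0 lerDl addr_ge0 // addr_ge0 // mulr_ge0.
  rewrite EgS; apply: (@le_trans _ _ (a * lam0 + Cc + M)); last by rewrite lerDr.
  apply: (@le_trans _ _ (\sum_x pi0 x * \sum_(b : bool) (if b then phi x else 1 - phi x)
                          * (a * lam0 + Cc + M))).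
    apply: ler_sum => x _; rewrite ler_wpM2l //; apply: ler_sum => b _.
    have [f0 f1] := andP (hphi x).
    have hu : 0 <= hstep a Cc b lam0 by rewrite /hstep addr_ge0 //; case: b => //; rewrite mulr_ge0.
    have hu2 : hstep a Cc b lam0 <= a * lam0 + Cc by rewrite /hstep lerD2r; case: b hu => //; rewrite mulr_ge0.
    have pb : 0 <= (if b then phi x else 1 - phi x) by case: b hu hu2 => //; rewrite subr_ge0.
    rewrite ler_wpM2l //.
    apply: le_trans (Eg_bound hp hp1 hphi hrho hcond a0 Cc0 k x hu) _.
    rewrite -/M; set r := rho ^+ k.
    have rr0 : 0 <= r by rewrite exprn_ge0.
    have rr1 : r <= 1 by rewrite exprn_ile1 // ltW.
    have : r * hstep a Cc b lam0 <= hstep a Cc b lam0 by rewrite ler_piMl.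
    have : 0 <= r * M by rewrite mulr_ge0.
    rewrite mulrBr.
    move: (r * hstep a Cc b lam0) (r * M) => t1 t2 ht1 ht2.
    lra.
  rewrite le_eqVlt; apply/orP; left; apply/eqP.
  under eq_bigr do rewrite -mulr_suml big_bool /= subrKC mul1r.
  by rewrite -mulr_suml hpi1 mul1r.
exists 0, (n%:R * (lam0 + (a * lam0 + Cc + M))), 0; split; first by rewrite lexx ltr01.
move=> k; rewrite mul0r add0r; apply: le_trans (hE k) _.
by rewrite ler_wpM2l.
Qed.
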